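(* Let $A,B\in\mathbb{R}^{n\times n}$ with $A$ symmetric positive definite, and suppose the block matrix $\begin{pmatrix}A & B\\ B^\intercal & A\end{pmatrix}$ is positive definite. Then $$2\begin{pmatrix}A & B\\ B^\intercal & A\end{pmatrix}^{-1}-\begin{pmatrix}A & 0\\ 0 & A\end{pmatrix}^{-1}$$ is positive definite. *)

(* Defs.v *)
From HB Require Import structures.
From mathcomp Require Import all_boot all_order all_algebra.
Set Implicit Arguments. Unset Strict Implicit. Unset Printing Implicit Defensive.
Import Order.TTheory GRing.Theory Num.Theory.
Local Open Scope ring_scope.

Definition posdef (R : realFieldType) (n : nat) (M : 'M[R]_n) : Prop :=
  M^T = M /\ (forall x : 'cV[R]_n, x != 0 -> 0 < (x^T *m M *m x) 0 0).

(* Main.v *)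
Require Import Defs.
From HB Require Import structures.
From mathcomp Require Import all_boot all_order all_algebra.
Import Order.TTheory GRing.Theory Num.Theory.
Local Open Scope ring_scope.

Lemma pd_unit (R : realFieldType) (n : nat) (M : 'M[R]_n) : posdef M -> M \in unitmx.
Proof.
case=> sM pM; rewrite unitmxE unitfE; apply/negP => /det0P [v nz vM].
have := pM v^T; rewrite trmx_eq0 nz trmxK vM mul0mx mxE ltxx.
by move=> /(_ isT).
Qed.

Lemma invmx_mul (R : realFieldType) (n : nat) (A B : 'M[R]_n) :
  A \in unitmx -> B \in unitmx -> invmx (A *m B) = invmx B *m invmx A.
Proof.
move=> uA uB.
have uAB : A *m B \in unitmx by rewrite unitmx_mul uA uB.
have e : A *m B *m (invmx B *m invmx A) = 1%:M.
  by rewrite mulmxA mulmxK // mulmxV.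
by rewrite -[invmx (A *m B)]mulmx1 -e mulmxA mulVmx // mul1mx.
Qed.

Lemma pd_congr (R : realFieldType) (n : nat) (M P : 'M[R]_n) :
  posdef M -> P \in unitmx -> posdef (P^T *m M *m P).
Proof.
case=> sM pM uP; split.
  by rewrite !trmx_mul trmxK sM mulmxA.
move=> x nx.
have -> : x^T *m (P^T *m M *m P) *m x = (P *m x)^T *m M *m (P *m x).
  by rewrite trmx_mul !mulmxA.
apply: pM; apply: contra nx => /eqP Px.
by rewrite -(mulKmx uP x) Px mulmx0.
Qed.

Lemma pd_add (R : realFieldType) (n : nat) (M N : 'M[R]_n) :
  posdef M -> posdef N -> posdef (M + N).
Proof.
case=> sM pM [sN pN]; split; first by rewrite linearD /= sM sN.
move=> x nx; rewrite mulmxDr mulmxDl mxE.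
by apply: addr_gt0; [apply: pM | apply: pN].
Qed.

Lemma pd_scale (R : realFieldType) (n : nat) (a : R) (M : 'M[R]_n) :
  0 < a -> posdef M -> posdef (a *: M).
Proof.
move=> a0 [sM pM]; split; first by rewrite linearZ /= sM.
move=> x nx; rewrite -scalemxAr -scalemxAl mxE.
by apply: mulr_gt0 => //; apply: pM.
Qed.
Arguments pd_unit {R n M}.

Lemma pd_inv (R : realFieldType) (n : nat) (M : 'M[R]_n) :
  posdef M -> posdef (invmx M).
Proof.
move=> pdM; have uM := pd_unit pdM; case: pdM => sM pM; split.
  by rewrite trmx_inv sM.
move=> x nx.
have ex : x = M *m (invmx M *m x) by rewrite mulKVmx.
have -> : x^T *m invmx M *m x = (invmx M *m x)^T *m M *m (invmx M *m x).
  by rewrite {1}ex trmx_mul sM -!mulmxA.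
apply: pM; apply: contra nx => /eqP y0.
by rewrite ex y0 mulmx0.
Qed.

Arguments pd_unit {R n M}.
Arguments pd_inv {R n M}.
Arguments pd_add {R n M N}.
Arguments pd_congr {R n M P}.
Arguments pd_scale {R n a M}.
Arguments invmx_mul {R n A B}.

Theorem lemmaA1 (R : realFieldType) (n : nat) (A B : 'M[R]_n) :
  posdef A ->
  posdef (block_mx A B B^T A) ->
  posdef (2%:R *: invmx (block_mx A B B^T A) - invmx (block_mx A 0 0 A)).
Proof.
move=> _ pdM.
set M := block_mx A B B^T A; set D := block_mx A 0 0 A.
pose J : 'M[R]_(n + n) := block_mx 1%:M 0 0 (- 1%:M).
have JT : J^T = J by rewrite /J tr_block_mx !trmx0 trmx1 linearN /= trmx1.
have JJ : J *m J = 1%:M.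
  rewrite /J mulmx_block !mulmx0 !mul0mx !mulmx1 !addr0 !add0r mulmxN mulmx1 opprK.
  by rewrite scalar_mx_block.
have uJ : J \in unitmx by case: (mulmx1_unit JJ).
have eN : J^T *m M *m J = 2%:R *: D - M.
  rewrite JT /J /M /D !mulmx_block !mulmx0 !mul0mx !mulmx1 !mul1mx !addr0 !add0r.
  rewrite !mulmxN !mulNmx !mulmx1 !mul1mx opprK scale_block_mx !scaler0.
  rewrite opp_block_mx add_block_mx !sub0r scaler_nat mulr2n addrK.
  done.
set N := 2%:R *: D - M.
have pdN : posdef N by rewrite /N -eN; apply: pd_congr.
have uM := pd_unit pdM; have uN := pd_unit pdN.
set Mi := invmx M; set Ni := invmx N.
have pdMi : posdef Mi by apply: pd_inv.
have pdS : posdef (Mi + Ni) by apply: pd_add => //; apply: pd_inv.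
set S := Mi + Ni.
have uS := pd_unit pdS.
have eMN : M + N = M *m S *m N.
  by rewrite /S /Mi /Ni (mulmxDr M) mulmxV // (mulmxDl _ _ N) mul1mx mulmxKV // addrC.
have eD : M + N = 2%:R *: D by rewrite /N addrC subrK.
have u2 : (2%:R : R) \is a GRing.unit by rewrite unitfE pnatr_eq0.
have uD2 : 2%:R *: D \in unitmx by rewrite -eD eMN !unitmx_mul uM uS uN.
have eDi : invmx D = 2%:R *: (Ni *m invmx S *m Mi).
  have : invmx (M + N) = 2%:R^-1 *: invmx D by rewrite eD invmxZ.
  rewrite eMN invmx_mul ?unitmx_mul ?uM ?uS // invmx_mul // => e.
  have n2 : (2%:R : R) != 0 by rewrite pnatr_eq0.
  by rewrite -[invmx D](scalerKV n2) -e mulmxA.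
have key : 2%:R *: Mi - invmx D = 2%:R *: (Mi^T *m invmx S *m Mi).
  rewrite eDi -scalerBr; congr (_ *: _).
  case: pdMi => -> _.
  by apply/eqP; rewrite subr_eq -!mulmxDl mulmxV // mul1mx.
rewrite key; apply: pd_scale; first by rewrite ltr0Sn.
by apply: pd_congr; [apply: pd_inv | rewrite unitmx_inv].
Qed.
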